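(* Let $f$, strategies $\sigma_k$ and half-lines $w^{(k)}$ be produced by Algorithm 1 (as described in the context). Then for every iteration $k$ for which $\sigma_{k+1}$ is defined, $\chi(f^{(\sigma_{k+1})})\le\chi(f^{(\sigma_k)})$.
   Context: Setting: $f:\mathbb{R}^n\to\mathbb{R}^n$ with $f_i(x)=\min_{a\in A_i}f^a_i(x)$, where each $A_i$ is finite and each $f^a_i:\mathbb{R}^n\to\mathbb{R}$ is polyhedral (piecewise affine on finitely many polyhedra covering $\mathbb{R}^n$), order-preserving ($x\le y\Rightarrow f^a_i(x)\le f^a_i(y)$), additively homogeneous ($f^a_i(\lambda+x)=\lambda+f^a_i(x)$) and convex. A strategy is a map $\sigma$ with $\sigma(i)\in A_i$ for each $i\in[n]$; $f^{(\sigma)}$ is the map with coordinates $f^{(\sigma)}_i=f^{\sigma(i)}_i$. For a polyhedral order-preserving additively homogeneous $g$, the cycle time $\chi(g)=\lim_k g^k(x)/k$ exists. A half-line is $w:t\mapsto t\eta+v$ considered for $t$ large (germ at infinity); it is invariant under $g$ if $g(w(t))=w(t+1)$ for all $t$ large, super-invariant if $g(w(t))\le w(t+1)$ for all $t$ large; every such $g$ has an invariant half-line, whose slope equals $\chi(g)$. Half-lines are compared coordinatewise for $t$ large. For polyhedral convex order-preserving additively homogeneous $g$ with $\eta=\chi(g)$: $\hat g(\eta)=\lim_t g(t\eta)/t$, $\hat g^{\eta}(v)=\lim_t(g(t\eta+v)-t\hat g(\eta))$, $\bar g=\hat g^{\eta}-\eta$; for a super-invariant half-line $w:t\mapsto t\eta+v$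 of $g$ with $\eta=\chi(g)$, $Q_g(w)$ denotes the half-line $t\mapsto t\eta+\lim_k\bar g^k(v)$, which is the unique invariant half-line of $g$ agreeing with $w$ on the critical nodes of $g$. Algorithm 1: (1) $k=0$; choose a strategy $\sigma_0$ and an invariant half-line $w^{(0)}:t\mapsto t\eta^{(0)}+v^{(0)}$ of $f^{(\sigma_0)}$. (2) If $f(w^{(k)}(t))=w^{(k)}(t+1)$ for $t$ large, stop, returning $w^{(k)}$ and $\sigma_k$. (3) Otherwise choose $\sigma_{k+1}$ with $f(w^{(k)}(t))=f^{(\sigma_{k+1})}(w^{(k)}(t))$ for $t$ large, conservatively: for each $i$, $\sigma_{k+1}(i)=\sigma_k(i)$ whenever $f_i(w^{(k)}(t))=f^{(\sigma_k)}_i(w^{(k)}(t))$ for $t$ large. (4) Compute any invariant half-line $t\mapsto t\eta^{(k+1)}+v'$ of $f^{(\sigma_{k+1})}$; if $\eta^{(k+1)}\neq\eta^{(k)}$ set $w^{(k+1)}:t\mapsto t\eta^{(k+1)}+v'$ and go to (6). (5) Otherwise (degenerate iteration) set $w^{(k+1)}=Q_{f^{(\sigma_{k+1})}}(w^{(k)})$. (6) Increase $k$ by one and go to (2). *)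

(* Defs.v *)
From mathcomp Require Import all_boot all_order all_algebra.
From mathcomp Require Import all_classical all_reals all_analysis.
Import Order.TTheory GRing.Theory Num.Theory.
Import numFieldNormedType.Exports.

Set Implicit Arguments.
Unset Strict Implicit.
Unset Printing Implicit Defensive.

Local Open Scope ring_scope.
Local Open Scope classical_set_scope.

Definition vec (R : realType) (n : nat) := 'I_n -> R.

Definition vle (R : realType) (n : nat) (x y : vec R n) : Prop :=
  forall i, x i <= y i.

Definition vshift (R : realType) (n : nat) (l : R) (x : vec R n) : vec R n :=
  fun i => l + x i.

Definition polyhedron (R : realType) (n : nat) (P : set (vec R n)) : Prop :=
  exists (q : nat) (a : 'I_q -> vec R n) (b : 'I_q -> R),
    P = [set x | forall j, \sum_(i < n) a j i * x i <= b j].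

Definition polyhedral (R : realType) (n : nat) (h : vec R n -> R) : Prop :=
  exists (p : nat) (P : 'I_p -> set (vec R n)) (c : 'I_p -> vec R n) (d : 'I_p -> R),
    [/\ forall j, polyhedron (P j),
        forall x, exists j, P j x
      & forall j x, P j x -> h x = \sum_(i < n) c j i * x i + d j].

Definition order_preserving (R : realType) (n : nat) (h : vec R n -> R) : Prop :=
  forall x y, vle x y -> h x <= h y.

Definition add_homogeneous (R : realType) (n : nat) (h : vec R n -> R) : Prop :=
  forall (l : R) x, h (vshift l x) = l + h x.

Definition convex_fun (R : realType) (n : nat) (h : vec R n -> R) : Prop :=
  forall x y (th : R), 0 <= th -> th <= 1 ->
    h (fun i => th * x i + (1 - th) * y i) <= th * h x + (1 - th) * h y.

(* Game data: A_i = 'I_(m i).+1 (finite, nonempty), maps fa i a = f^a_i. *)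
Definition strategy (n : nat) (m : 'I_n -> nat) := forall i : 'I_n, 'I_(m i).+1.

Definition fmin (R : realType) (n : nat) (m : 'I_n -> nat)
  (fa : forall i : 'I_n, 'I_(m i).+1 -> vec R n -> R) : vec R n -> vec R n :=
  fun x i => \big[Num.min/fa i ord0 x]_(a < (m i).+1) fa i a x.

Definition fsig (R : realType) (n : nat) (m : 'I_n -> nat)
  (fa : forall i : 'I_n, 'I_(m i).+1 -> vec R n -> R) (sig : strategy m)
  : vec R n -> vec R n :=
  fun x i => fa i (sig i) x.

(* cycle time chi(g) = lim_k g^k(x)/k (taken at x = 0; independent of x) *)
Definition chi (R : realType) (n : nat) (g : vec R n -> vec R n) : vec R n :=
  fun i => lim ((fun k : nat => (iter k g (fun _ => 0) i / k%:R : R)) @ \oo).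

Definition hl (R : realType) (n : nat) (eta v : vec R n) (t : R) : vec R n :=
  fun i => t * eta i + v i.

Definition eventually_R (R : realType) (P : R -> Prop) : Prop :=
  exists T : R, forall t, T <= t -> P t.

Definition invariant_hl (R : realType) (n : nat) (g : vec R n -> vec R n)
  (eta v : vec R n) : Prop :=
  eventually_R (fun t => g (hl eta v t) = hl eta v (t + 1)).

Definition ghat (R : realType) (n : nat) (g : vec R n -> vec R n) (eta : vec R n)
  : vec R n :=
  fun i => lim ((g (fun j => t * eta j) i / t : R) @[t --> +oo]).

Definition ghat_eta (R : realType) (n : nat) (g : vec R n -> vec R n)
  (eta v : vec R n) : vec R n :=
  fun i => lim ((g (hl eta v t) i - t * ghat g eta i : R) @[t --> +oo]).

Definition gbar (R : realType) (n : nat) (g : vec R n -> vec R n)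
  (eta : vec R n) : vec R n -> vec R n :=
  fun v i => ghat_eta g eta v i - eta i.

(* offset of Q_g(w) for w : t |-> t eta + v, namely lim_k \bar g^k(v) *)
Definition Q_offset (R : realType) (n : nat) (g : vec R n -> vec R n)
  (eta v : vec R n) : vec R n :=
  fun i => lim ((fun k : nat => (iter k (gbar g eta) v i : R)) @ \oo).

(* A run of Algorithm 1: strategies sig k and half-lines w^(k) : t |-> t eta k + v k.
   Iteration k (steps 3-5) is executed iff the stopping test of step 2 failed for
   w^(0), ..., w^(k). *)
Definition alg1_run (R : realType) (n : nat) (m : 'I_n -> nat)
  (fa : forall i : 'I_n, 'I_(m i).+1 -> vec R n -> R)
  (sig : nat -> strategy m) (eta v : nat -> vec R n) : Prop :=
  invariant_hl (fsig fa (sig 0%N)) (eta 0%N) (v 0%N) /\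
  forall k : nat,
    (forall j : nat, (j <= k)%N -> ~ invariant_hl (fmin fa) (eta j) (v j)) ->
    [/\ (* step 3: sig (k+1) attains the minimum along w^(k) *)
        eventually_R (fun t => fmin fa (hl (eta k) (v k) t)
                               = fsig fa (sig k.+1) (hl (eta k) (v k) t)),
        (* step 3: conservative choice *)
        (forall i, eventually_R (fun t => fmin fa (hl (eta k) (v k) t) i
                                          = fsig fa (sig k) (hl (eta k) (v k) t) i) ->
                   sig k.+1 i = sig k i),
        (exists v' : vec R n, invariant_hl (fsig fa (sig k.+1)) (eta k.+1) v' /\
                              (eta k.+1 <> eta k -> v k.+1 = v'))
      & (* step 5: degenerate iteration *)
        (eta k.+1 = eta k ->
           v k.+1 = Q_offset (fsig fa (sig k.+1)) (eta k) (v k))].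

(* Main.v *)
Require Import Defs.
From mathcomp Require Import all_boot all_order all_algebra.
From mathcomp Require Import all_classical all_reals all_analysis.
Import Order.TTheory GRing.Theory Num.Theory.
Import numFieldNormedType.Exports.
Local Open Scope ring_scope.
Local Open Scope classical_set_scope.
Set Implicit Arguments.
Unset Strict Implicit.
Unset Printing Implicit Defensive.

Definition MH (R : realType) (n : nat) (g : vec R n -> vec R n) :=
  forall i, order_preserving (fun x => g x i) /\ add_homogeneous (fun x => g x i).

Lemma MH_mono (R : realType) n (g : vec R n -> vec R n) x y :
  MH g -> vle x y -> vle (g x) (g y).
Proof. by move=> H xy i; have [Hm _] := H i; exact: Hm. Qed.

Lemma MH_shift (R : realType) n (g : vec R n -> vec R n) c x y :
  MH g -> vle x (vshift c y) -> vle (g x) (vshift c (g y)).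
Proof.
move=> H xy i; have [Hm Hh] := H i.
rewrite /vshift; have := Hh c y => /= <-; exact: Hm.
Qed.

Lemma iter_shift (R : realType) n (g : vec R n -> vec R n) c x y k :
  MH g -> vle x (vshift c y) -> vle (iter k g x) (vshift c (iter k g y)).
Proof.
move=> H xy; elim: k => [|k IH] //=; exact: MH_shift.
Qed.

Definition dist (R : realType) n (x y : vec R n) : R := \sum_i `|x i - y i|.

Lemma dist_ge0 (R : realType) n (x y : vec R n) : 0 <= dist x y.
Proof. by apply: sumr_ge0 => i _. Qed.

Lemma vle_dist (R : realType) n (x y : vec R n) : vle x (vshift (dist x y) y).
Proof.
move=> i; rewrite /vshift -lerBlDr; apply: le_trans (ler_norm _) _.
rewrite /dist (bigD1 i) //= lerDl; exact: sumr_ge0.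
Qed.

Lemma iter_inv (R : realType) n (g : vec R n -> vec R n) eta u T :
  (forall t, T <= t -> g (hl eta u t) = hl eta u (t + 1)) ->
  forall k t, T <= t -> iter k g (hl eta u t) = hl eta u (t + k%:R).
Proof.
move=> H; elim=> [|k IH] t Ht /=; first by rewrite addr0.
rewrite IH // H; last by rewrite (le_trans Ht) // lerDl.
by rewrite -addrA -natr1.
Qed.

Lemma iter_sup (R : realType) n (g : vec R n -> vec R n) eta u T :
  MH g ->
  (forall t, T <= t -> vle (g (hl eta u t)) (hl eta u (t + 1))) ->
  forall k t, T <= t -> vle (iter k g (hl eta u t)) (hl eta u (t + k%:R)).
Proof.
move=> Hg H; elim=> [|k IH] t Ht /=; first by rewrite addr0.
move=> i; apply: le_trans (MH_mono Hg (IH t Ht) i) _.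
have := H (t + k%:R); rewrite (le_trans Ht) ?lerDl // => /(_ isT i).
by rewrite -addrA -natr1.
Qed.

Lemma cvg_bounded (R : realType) (a : nat -> R) (e B : R) :
  (forall k, `|a k - k%:R * e| <= B) ->
  (fun k => a k / k%:R) @ \oo --> e.
Proof.
move=> H; apply/cvgrPdist_le => eps eps0.
near=> k.
have k0 : 0 < k%:R :> R by near: k; apply: nbhs_infty_gtr.
have -> : e - a k / k%:R = - ((a k - k%:R * e) / k%:R).
  by rewrite mulrBl mulrAC divff ?mul1r ?opprB // gt_eqF.
have ik : 0 < k%:R^-1 :> R by rewrite invr_gt0.
rewrite normrN normrM (gtr0_norm ik) -ler_pdivlMr // invrK.
apply: le_trans (H k) _; rewrite -ler_pdivrMl //.
near: k; apply: nbhs_infty_ger.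
Unshelve. all: by end_near. Qed.

From mathcomp Require Import lra.

Lemma chi_inv (R : realType) n (g : vec R n -> vec R n) eta u :
  MH g -> invariant_hl g eta u -> chi g = eta.
Proof.
move=> Hg [T HT]; set x0 := hl eta u T.
have E k : iter k g x0 = hl eta u (T + k%:R) by apply: (iter_inv HT).
apply/funext => i; rewrite /chi; apply: cvg_lim => //.
apply: (@cvg_bounded _ (fun k => iter k g (fun _ => 0) i) _ (dist (fun _ => 0) x0 + dist x0 (fun _ => 0) + `|T * eta i + u i|)) => k.
have h1 := iter_shift k Hg (vle_dist (fun _ => 0) x0) i.
have h2 := iter_shift k Hg (vle_dist x0 (fun _ => 0)) i.
move: h1 h2; rewrite /vshift !E /hl.
have d1 := dist_ge0 (fun _ : 'I_n => 0 : R) x0.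
have d2 := dist_ge0 x0 (fun _ : 'I_n => 0 : R).
have n1 := ler_norm (T * eta i + u i).
set a := iter k g _ i.
move=> h1 h2; rewrite ler_norml; apply/andP; split.
  have n3 : - (T * eta i + u i) <= `|T * eta i + u i| by rewrite -normrN ler_norm.
  rewrite mulrDl in h2. lra.
rewrite mulrDl in h1.
lra.
Qed.

Definition sup_hl (R : realType) n (g : vec R n -> vec R n) (eta v : vec R n) :=
  eventually_R (fun t => vle (g (hl eta v t)) (hl eta v (t + 1))).

Lemma slope_le (R : realType) n (g : vec R n -> vec R n) eta' u eta v :
  MH g -> invariant_hl g eta' u -> sup_hl g eta v -> vle eta' eta.
Proof.
move=> Hg [T HT] [T' HT'] i.
set x0 := hl eta' u T; set y0 := hl eta v T'.
have E k : iter k g x0 = hl eta' u (T + k%:R) by apply: (iter_inv HT).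
have S k := iter_sup Hg HT' k (lexx T') i.
set c := dist x0 y0.
have B k : (T + k%:R) * eta' i + u i <= c + ((T' + k%:R) * eta i + v i).
  have h := iter_shift k Hg (vle_dist x0 y0) i.
  move: h; rewrite /vshift E /hl => h; apply: le_trans h _.
  by rewrite lerD2l; apply: S.
rewrite leNgt; apply/negP => lt.
set C := c + T' * eta i + v i - T * eta' i - u i.
have d0 : 0 < eta' i - eta i by rewrite subr_gt0.
have hk := archi_boundP (divr_ge0 (normr_ge0 C) (ltW d0)).
set k := Num.bound _ in hk.
have := B k; rewrite !mulrDl => h.
have : `|C| < k%:R * (eta' i - eta i) by rewrite -ltr_pdivrMr.
have : C <= `|C| by apply: ler_norm.
rewrite /C; lra.
Qed.

Lemma ev_of_near (R : realType) (P : R -> Prop) :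
  (\forall t \near +oo, P t) -> eventually_R P.
Proof.
case=> M [_ HM]; exists (M + 1) => t Ht; apply: HM.
by apply: lt_le_trans Ht; rewrite ltrDl.
Qed.

Lemma near_of_ev (R : realType) (P : R -> Prop) :
  eventually_R P -> (\forall t \near +oo, P t).
Proof.
case=> T HT; exists T; split; first exact: num_real.
by move=> t /ltW; apply: HT.
Qed.

Lemma lin_hl (R : realType) n (a eta x : vec R n) t :
  \sum_(i < n) a i * hl eta x t i = t * (\sum_i a i * eta i) + \sum_i a i * x i.
Proof.
rewrite mulr_sumr -big_split /=; apply: eq_bigr => i _.
by rewrite /hl mulrDr mulrCA.
Qed.

Lemma polyhedron_ray (R : realType) n (P : set (vec R n)) eta x :
  polyhedron P ->
  (\forall t \near +oo, P (hl eta x t)) \/ (\forall t \near +oo, ~ P (hl eta x t)).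
Proof.
case=> q [a [b ->]] /=.
have [allneg|] := boolP [forall k, \sum_i a k i * eta i <= 0].
  have [[t0 Ht0]|nex] := pselect (exists t0, forall k, \sum_i a k i * hl eta x t0 i <= b k).
    left; near=> t => k.
    have tt0 : t0 <= t by near: t; apply: nbhs_pinfty_ge; exact: num_real.
    have := Ht0 k; rewrite !lin_hl => h; apply: le_trans h.
    have := forallP allneg k; rewrite lerD2r => al.
    nra.
  right; near=> t => Hk; apply: nex; by exists t.
rewrite negb_forall => /existsP [k]; rewrite -ltNge => apos.
right; near=> t => Hk.
have := Hk k; rewrite lin_hl => h.
have : (b k - \sum_i a k i * x i) / (\sum_i a k i * eta i) < t.
  by near: t; apply: nbhs_pinfty_gt; exact: num_real.
rewrite ltr_pdivrMr //; lra.
Unshelve. all: by end_near. Qed.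

Lemma poly_affine (R : realType) n (h : vec R n -> R) eta x :
  polyhedral h -> exists a b, \forall t \near +oo, h (hl eta x t) = a * t + b.
Proof.
case=> p [P [c [d [HP Hcov Haff]]]].
have [[j Hj]|nall] := pselect (exists j, \forall t \near +oo, P j (hl eta x t)).
  exists (\sum_i c j i * eta i), (\sum_i c j i * x i + d j).
  apply: filterS Hj => t Pt; rewrite (Haff j _ Pt) lin_hl.
  by rewrite addrA mulrC.
have : \forall t \near +oo, forall j, ~ P j (hl eta x t).
  apply: filter_forall => j.
  by case: (polyhedron_ray eta x (HP j)) => // hj; exfalso; apply: nall; exists j.
move=> /(pinfty_ex_gt (@real0 _)) [t _ Ht].
by have [j Pj] := Hcov (hl eta x t); exfalso; exact: (Ht j).
Qed.

Definition PH (R : realType) n (g : vec R n -> vec R n) :=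
  forall i, polyhedral (fun x => g x i).

Lemma hl_dist (R : realType) n (eta x y : vec R n) t :
  vle (hl eta x t) (vshift (dist x y) (hl eta y t)).
Proof.
move=> i; have := vle_dist x y i; rewrite /vshift /hl; lra.
Qed.

Lemma slope_eq (R : realType) n (g : vec R n -> vec R n) eta u x i :
  MH g -> PH g -> invariant_hl g eta u ->
  exists b, \forall t \near +oo, g (hl eta x t) i = t * eta i + b.
Proof.
move=> Hg Hp Hu.
have [a [b Hab]] := poly_affine eta x (Hp i).
have Hu' := near_of_ev Hu.
have K : \forall t \near +oo,
   a * t + b <= dist x u + ((t + 1) * eta i + u i) /\
   (t + 1) * eta i + u i <= dist u x + (a * t + b).
  near=> t.
  have e1 : g (hl eta x t) i = a * t + b by near: t.
  have e2 : g (hl eta u t) = hl eta u (t + 1) by near: t.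
  have h1 := MH_shift Hg (hl_dist eta x u t) i.
  have h2 := MH_shift Hg (hl_dist eta u x t) i.
  move: h1 h2; rewrite /vshift e1 e2 {1 2}/hl; split; lra.
exists b.
have [lt|gt|eq] := ltgtP a (eta i).
- have : \forall t \near +oo, (t + 1) * eta i + u i <= dist u x + (a * t + b)
      /\ (dist u x + b - eta i - u i) / (eta i - a) < t.
    by near=> t; split; [near: t; apply: filterS K => ? []|near: t; apply: nbhs_pinfty_gt; exact: num_real].
  move=> /(pinfty_ex_gt (@real0 _)) [t _ [h1 h2]].
  have d0 : 0 < eta i - a by rewrite subr_gt0.
  move: h2; rewrite ltr_pdivrMr // => h2; exfalso; move: h1 h2; rewrite mulrDl mul1r; nra.
- have : \forall t \near +oo, a * t + b <= dist x u + ((t + 1) * eta i + u i)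
      /\ (dist x u + eta i + u i - b) / (a - eta i) < t.
    by near=> t; split; [near: t; apply: filterS K => ? []|near: t; apply: nbhs_pinfty_gt; exact: num_real].
  move=> /(pinfty_ex_gt (@real0 _)) [t _ [h1 h2]].
  have d0 : 0 < a - eta i by rewrite subr_gt0.
  move: h2; rewrite ltr_pdivrMr // => h2; exfalso; move: h1 h2; rewrite mulrDl mul1r; nra.
- by apply: filterS Hab => t ->; rewrite eq mulrC.
Unshelve. all: by end_near. Qed.

Lemma ghat_eq (R : realType) n (g : vec R n -> vec R n) eta u :
  MH g -> PH g -> invariant_hl g eta u -> ghat g eta = eta.
Proof.
move=> Hg Hp Hu; apply/funext => i; rewrite /ghat.
have [b Hb] := slope_eq (fun _ => 0) i Hg Hp Hu.
have E t : (fun j => t * eta j) = hl eta (fun _ => 0) t.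
  by apply/funext => j; rewrite /hl addr0.
apply: cvg_lim => //; apply/cvgrPdist_le => e e0.
near=> t.
have t0 : 0 < t by near: t; apply: nbhs_pinfty_gt; exact: num_real.
have tb : `|b| / e <= t by near: t; apply: nbhs_pinfty_ge; exact: num_real.
rewrite (E t).
have -> : g (hl eta (fun=> 0) t) i = t * eta i + b by near: t.
rewrite mulrDl mulrAC divff ?gt_eqF // mul1r opprD addrA subrr add0r normrN.
rewrite normrM (gtr0_norm (_ : 0 < t^-1)) ?invr_gt0 // ler_pdivrMr //.
by rewrite mulrC -ler_pdivrMr.
Unshelve. all: by end_near. Qed.

Lemma gbar_spec (R : realType) n (g : vec R n -> vec R n) eta u x :
  MH g -> PH g -> invariant_hl g eta u ->
  \forall t \near +oo, g (hl eta x t) = hl eta (gbar g eta x) (t + 1).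
Proof.
move=> Hg Hp Hu.
have : \forall t \near +oo, forall i, g (hl eta x t) i = hl eta (gbar g eta x) (t + 1) i.
  apply: filter_forall => i.
  have [b Hb] := slope_eq x i Hg Hp Hu.
  have gb : gbar g eta x i = b - eta i.
    rewrite /gbar /ghat_eta (ghat_eq Hg Hp Hu); congr (_ - _).
    apply: lim_near_cst. all: try exact: Rhausdorff. near=> t.
    have -> : g (hl eta x t) i = t * eta i + b by near: t.
    by rewrite addrC addKr.
  apply: filterS Hb => t ->; rewrite /hl gb; lra.
move=> H; apply: filterS H => t H; exact: funext.
Unshelve. all: by end_near. Qed.

Lemma near2 (R : realType) (A B : R -> Prop) :
  (\forall t \near +oo, A t) -> (\forall t \near +oo, B t) -> exists t, A t /\ B t.
Proof.
move=> HA HB.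
have : \forall t \near +oo, A t /\ B t by near=> t; split; near: t.
by move=> /(pinfty_ex_gt (@real0 _)) [t _ H]; exists t.
Unshelve. all: by end_near. Qed.

Lemma gbar_shift (R : realType) n (g : vec R n -> vec R n) eta u x y c :
  MH g -> PH g -> invariant_hl g eta u ->
  vle x (vshift c y) -> vle (gbar g eta x) (vshift c (gbar g eta y)).
Proof.
move=> Hg Hp Hu xy i.
have [t [e1 e2]] := near2 (gbar_spec x Hg Hp Hu) (gbar_spec y Hg Hp Hu).
have h : vle (hl eta x t) (vshift c (hl eta y t)).
  by move=> j; have := xy j; rewrite /vshift /hl; lra.
have := MH_shift Hg h i; rewrite e1 e2 /vshift /hl; lra.
Qed.

Lemma gbar_mono (R : realType) n (g : vec R n -> vec R n) eta u x y :
  MH g -> PH g -> invariant_hl g eta u ->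
  vle x y -> vle (gbar g eta x) (gbar g eta y).
Proof.
move=> Hg Hp Hu xy i.
have h : vle x (vshift 0 y) by move=> j; rewrite /vshift add0r.
by have := gbar_shift Hg Hp Hu h i; rewrite /vshift add0r.
Qed.

Lemma gbar_fix (R : realType) n (g : vec R n -> vec R n) eta u :
  MH g -> PH g -> invariant_hl g eta u -> gbar g eta u = u.
Proof.
move=> Hg Hp Hu; apply/funext => i.
have [t [e1 e2]] := near2 (gbar_spec u Hg Hp Hu) (near_of_ev Hu).
have := congr1 (fun w => w i) (etrans (esym e1) e2); rewrite /hl; lra.
Qed.

Lemma gbar_sup (R : realType) n (g : vec R n -> vec R n) eta u v :
  MH g -> PH g -> invariant_hl g eta u -> sup_hl g eta v ->
  vle (gbar g eta v) v.
Proof.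
move=> Hg Hp Hu Hv i.
have [t [e1 e2]] := near2 (gbar_spec v Hg Hp Hu) (near_of_ev Hv).
have := e2 i; rewrite e1 /hl; lra.
Qed.

Lemma Q_inv (R : realType) n (g : vec R n -> vec R n) eta u v :
  MH g -> PH g -> invariant_hl g eta u -> sup_hl g eta v ->
  invariant_hl g eta (Q_offset g eta v).
Proof.
move=> Hg Hp Hu Hv.
set G := gbar g eta.
set s := fun k => iter k G v.
have dec k : vle (s k.+1) (s k).
  elim: k => [|k IH]; first exact: (gbar_sup Hg Hp Hu Hv).
  exact: (gbar_mono Hg Hp Hu IH).
have itG k x y c : vle x (vshift c y) -> vle (iter k G x) (vshift c (iter k G y)).
  move=> xy; elim: k => [|k IH] //=; exact: (gbar_shift Hg Hp Hu IH).
have itu k : iter k G u = u.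
  by elim: k => [|k IH] //=; rewrite IH; exact: (gbar_fix Hg Hp Hu).
have low k : vle u (vshift (dist u v) (s k)).
  by rewrite -{1}(itu k); apply: itG; apply: vle_dist.
have nonincr j : nonincreasing_seq (fun k => s k j).
  by apply/nonincreasing_seqP => k; apply: dec.
have cv j : cvgn (fun k => s k j).
  apply/cvg_ex; eexists; apply: nonincreasing_cvgn => //.
  exists (u j - dist u v) => _ [k _ <-]; have := low k j; rewrite /vshift; lra.
set L := Q_offset g eta v.
have LE j : L j = limn (fun k => s k j) by [].
have Lle k j : L j <= s k j by rewrite LE; apply: nonincreasing_cvgn_ge.
have GL : G L = L.
  apply/funext => i; apply/eqP; rewrite eq_le; apply/andP; split.
    rewrite LE; apply: limr_ge => //.
    near=> k.
    have k0 : (0 < k)%N by near: k; exact: nbhs_infty_gt.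
    rewrite -(prednK k0) /=.
    by apply: (gbar_mono Hg Hp Hu) => j; apply: Lle.
  apply/ler_addgt0Pl => e e0.
  near \oo => k.
  have hk : vle (s k) (vshift e L).
    have : forall j, `|L j - s k j| <= e.
      near: k; apply: filter_forall => j.
      rewrite LE; move: (cv j) => /cvgrPdist_le; apply; exact: e0.
    move=> H j; have := H j; rewrite /vshift ler_norml => /andP [h1 h2]; lra.
  have := gbar_shift Hg Hp Hu hk i; rewrite -/G /vshift => h.
  apply: le_trans h; exact: (Lle k.+1 i).
apply: ev_of_near; apply: filterS (gbar_spec L Hg Hp Hu) => t ->.
by rewrite -/G GL.
Unshelve. all: by end_near. Qed.

Lemma fmin_le (R : realType) (n : nat) (m : 'I_n -> nat)
  (fa : forall i : 'I_n, 'I_(m i).+1 -> vec R n -> R) (s : strategy m) x :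
  vle (fmin fa x) (fsig fa s x).
Proof.
move=> i; rewrite /fmin /fsig (bigD1 (s i)) //=.
by rewrite ge_min lexx.
Qed.

Lemma sup_step (R : realType) (n : nat) (m : 'I_n -> nat)
  (fa : forall i : 'I_n, 'I_(m i).+1 -> vec R n -> R) (s1 s2 : strategy m) eta v :
  invariant_hl (fsig fa s1) eta v ->
  eventually_R (fun t => fmin fa (hl eta v t) = fsig fa s2 (hl eta v t)) ->
  sup_hl (fsig fa s2) eta v.
Proof.
move=> /near_of_ev H1 /near_of_ev H2; apply: ev_of_near.
near=> t.
have e1 : fsig fa s1 (hl eta v t) = hl eta v (t + 1) by near: t.
have e2 : fmin fa (hl eta v t) = fsig fa s2 (hl eta v t) by near: t.
by rewrite -e2 -e1; apply: fmin_le.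
Unshelve. all: by end_near. Qed.

Theorem lemma4p2 (R : realType) (n : nat) (m : 'I_n -> nat)
  (fa : forall i : 'I_n, 'I_(m i).+1 -> vec R n -> R)
  (Hpoly : forall i a, polyhedral (fa i a))
  (Hmono : forall i a, order_preserving (fa i a))
  (Hhom : forall i a, add_homogeneous (fa i a))
  (Hconv : forall i a, convex_fun (fa i a))
  (sig : nat -> strategy m) (eta v : nat -> vec R n) :
  alg1_run fa sig eta v ->
  forall k : nat,
    (forall j : nat, (j <= k)%N -> ~ invariant_hl (fmin fa) (eta j) (v j)) ->
    vle (chi (fsig fa (sig k.+1))) (chi (fsig fa (sig k))).
Proof.
move=> [H0 Hstep] k Hk.
have MHj (s : strategy m) : MH (fsig fa s).
  by move=> i; split; [exact: Hmono|exact: Hhom].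
have PHj (s : strategy m) : PH (fsig fa s) by move=> i; exact: Hpoly.
have Hkj j : (j <= k)%N -> forall i, (i <= j)%N -> ~ invariant_hl (fmin fa) (eta i) (v i).
  by move=> jk i ij; apply: Hk; apply: leq_trans ij jk.
have inv : forall j, (j <= k)%N -> invariant_hl (fsig fa (sig j)) (eta j) (v j).
  elim=> [|j IH] jk //.
  have jk' : (j <= k)%N by apply: ltnW.
  have [H3 _ [v' [Hv' Hne]] Hdeg] := Hstep j (Hkj j jk').
  have Hsup := sup_step (IH jk') H3.
  have [eq|ne] := eqVneq (eta j.+1) (eta j).
    rewrite (Hdeg eq) eq; rewrite eq in Hv'.
    exact: (Q_inv (MHj _) (PHj _) Hv' Hsup).
  by rewrite (Hne (elimN eqP ne)).
have [H3 _ [v' [Hv' _]] _] := Hstep k (Hkj k (leqnn k)).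
have Hsup := sup_step (inv k (leqnn k)) H3.
rewrite (chi_inv (MHj _) Hv') (chi_inv (MHj _) (inv k (leqnn k))).
exact: (slope_le (MHj _) Hv' Hsup).
Qed.
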